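(* Let $\rho=\rho_n>0$ and let $m=m_n>1$ be integers. For $m=2,3,\dots$ let $\tilde\Omega_n(m)=\{\omega\in\Omega:\max_{1\le l\le L_n(\rho)}|C_{n,l}(\rho)|<m\}$. If $\rho\ge\rho_n^+(m)\equiv\frac1m\Big(1+\frac{(m+2)\log n+\log m!}{n\log2}\Big)$, then $\mathbb P\big(\liminf_{n\to\infty}\tilde\Omega_n(m)\big)=1$.
   Context: Let $\mathcal V_n=\{-1,1\}^n$ with nearest-neighbour (hypercube) graph structure. Let $(g(x))_{x\in\mathcal V_n}$, $n\ge1$, be i.i.d. standard Gaussians on $(\Omega,\mathcal F,\mathbb P)$, $\beta>0$, and $w_n(x)=\exp(-\beta\sqrt ng(x))$. For $\rho>0$ let $r_n(\rho)$ be defined by $2^{\rho n}\mathbb P(w_n(x)\ge r_n(\rho))=1$ and $V_n(\rho)=\{x:w_n(x)\ge r_n(\rho)\}$. $C_{n,l}(\rho)$, $1\le l\le L_n(\rho)$, are the vertex sets of the connected components with at least two vertices of the subgraph of the hypercube induced on $V_n(\rho)$. *)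

(* Defs.v *)
From HB Require Import structures.
From mathcomp Require Import all_boot all_order all_algebra.
From mathcomp Require Import all_classical all_reals all_analysis.
Set Implicit Arguments. Unset Strict Implicit. Unset Printing Implicit Defensive.
Import Order.TTheory GRing.Theory Num.Theory.
Local Open Scope classical_set_scope.
Local Open Scope ring_scope.

(* Vertices of the hypercube V_n = {-1,1}^n, coded as boolean vectors
   (true <-> +1, false <-> -1). *)
Definition vtx (n : nat) := {ffun 'I_n -> bool}.

Definition hadj (n : nat) : rel (vtx n) :=
  fun x y => #|[set i | x i != y i]| == 1%N.

Definition induced_rel (n : nat) (V : {set vtx n}) : rel (vtx n) :=
  fun x y => [&& x \in V, y \in V & hadj x y].

Definition comp_of (n : nat) (V : {set vtx n}) (x : vtx n) : {set vtx n} :=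
  [set y | connect (induced_rel V) x y].

Definition big_components (n : nat) (V : {set vtx n}) : {set {set vtx n}} :=
  [set C : {set vtx n} | [exists x in V, (C == comp_of V x) && (1 < #|C|)%N]].

(* max_l |C_{n,l}| (0 if there are no such components) *)
Definition max_comp_size (n : nat) (V : {set vtx n}) : nat :=
  \max_(C in big_components V) #|C|.

Definition mutually_independent {R : realType} {d : measure_display}
  {T : measurableType d} (P : probability T R) (I : finType)
  (X : I -> T -> R) : Prop :=
  forall B : I -> set R, (forall i, measurable (B i)) ->
    P (\bigcap_(i in [set: I]) (X i @^-1` B i)) = (\prod_(i : I) P (X i @^-1` B i))%E.

Definition std_gaussian {R : realType} {d : measure_display}
  {T : measurableType d} (P : probability T R) (X : T -> R) : Prop :=
  forall B : set R, measurable B -> P (X @^-1` B) = normal_prob 0 1 B.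

Definition rho_plus {R : realType} (n m : nat) : R :=
  (m%:R)^-1 * (1 + ((m.+2)%:R * ln (n%:R) + ln ((m`!)%:R)) / (n%:R * ln 2)).

(* Main.v *)
Require Import Defs.
From HB Require Import structures.
From mathcomp Require Import all_boot all_order all_algebra.
From mathcomp Require Import all_classical all_reals all_analysis.
From mathcomp Require Import ring lra.
Import Order.TTheory GRing.Theory Num.Theory.
Set Implicit Arguments. Unset Strict Implicit. Unset Printing Implicit Defensive.

Section Comb.
Variables n M : nat.

Definition flipv (x : vtx n) (i : 'I_n) : vtx n :=
  [ffun j => if j == i then ~~ x j else x j].

Definition pcode := {ffun 'I_M -> 'I_M * 'I_n}.

Fixpoint gen (x0 : vtx n) (f : pcode) (k : nat) : seq (vtx n) :=
  match k with
  | 0 => [:: x0]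
  | k1.+1 =>
    let s := gen x0 f k1 in
    match (insub k : option 'I_M) with
    | Some o => rcons s (flipv (nth x0 s (f o).1) (f o).2)
    | None => s
    end
  end.

Definition codes_ok (f : pcode) := [forall o, ((f o).1 <= o)%N].

Definition Sc (x0 : vtx n) (f : pcode) : {set vtx n} := [set x in gen x0 f M.-1].

Definition Sfam : {set {set vtx n}} :=
  [set Sc c.1 c.2 | c in [set c : vtx n * pcode | codes_ok c.2 && (#|Sc c.1 c.2| == M)]].

Definition upd (f : pcode) (o : 'I_M) v : pcode := [ffun o1 => if o1 == o then v else f o1].

Lemma gen_upd x0 f (o : 'I_M) v k : (k < o)%N -> gen x0 (upd f o v) k = gen x0 f k.
Proof.
elim: k => [//|k IH] lt /=.
rewrite IH ?(ltn_trans _ lt) //.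
case: insubP => [ o1 _ Ho1|//].
have -> : upd f o v o1 = f o1 by rewrite ffunE; case: eqP => // E; move: lt; rewrite -Ho1 E ltnn.
done.
Qed.

Lemma mem_gen0 x0 f k : x0 \in gen x0 f k.
Proof.
elim: k => [|k IH] /=; first by rewrite inE.
by case: insubP => [ o1 _ _|//]; rewrite mem_rcons inE IH orbT.
Qed.

Lemma hadjE (x y : vtx n) : hadj x y = (#|[set i | x i != y i]| == 1%N).
Proof.
rewrite /hadj; congr (_ == _); apply: eq_card => i; rewrite inE.
by apply/idP/idP; rewrite in_setE.
Qed.

Lemma hadj_flip (x y : vtx n) : hadj x y -> exists i, y = flipv x i.
Proof.
rewrite hadjE => /cards1P [i Hi]; exists i; apply/ffunP => j; rewrite ffunE.
case: eqP => [->|/eqP ne].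
  have : i \in [set i0 | x i0 != y i0] by rewrite Hi set11.
  by rewrite inE; case: (x i); case: (y i).
have : j \notin [set i0 | x i0 != y i0] by rewrite Hi inE.
by rewrite inE negbK => /eqP.
Qed.

Lemma induced_sym (V : {set vtx n}) : symmetric (induced_rel V).
Proof.
move=> x y; rewrite /induced_rel andbCA; congr (_ && (_ && _)); rewrite !hadjE.
by congr (_ == _); apply: eq_card => i; rewrite !inE eq_sym.
Qed.

Lemma connect_inV (V : {set vtx n}) x y : x \in V -> connect (induced_rel V) x y -> y \in V.
Proof.
move=> xV /connectP [p Hp ->]; elim: p x xV Hp => [//|b p IH] x xV /= /andP [e Hp].
by apply: IH Hp; case/and3P: e.
Qed.

Lemma exit_path (e : rel (vtx n)) (s : seq (vtx n)) a p :
  a \in s -> path e a p -> last a p \notin s ->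
  exists u z, [/\ u \in s, z \notin s, e u z & connect e a z].
Proof.
elim: p a => [a -> //|b p IH] a aS /= /andP [eab Hp] Hl.
case bS: (b \in s).
  have [u [z [uS zS euz cbz]]] := IH b bS Hp Hl.
  by exists u, z; split => //; apply: connect_trans cbz; apply: connect1.
by exists a, b; split => //; [rewrite bS | apply: connect1].
Qed.

Lemma cover_comp (V : {set vtx n}) : (1 < M)%N -> (M <= max_comp_size V)%N ->
  exists2 S, S \in Sfam & S \subset V.
Proof.
move=> M1 HM; have M0 : (0 < M)%N := ltnW M1.
have [C CB CM] : exists2 C, C \in big_components V & (M <= #|C|)%N.
  case: (boolP [exists C in big_components V, M <= #|C|]) => [/existsP [C /andP [? ?]]|H].
    by exists C.
  exfalso; move: HM; apply/negP; rewrite -ltnNge.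
  have : (max_comp_size V <= M.-1)%N.
    apply/bigmax_leqP => C CB; move: H; rewrite negb_exists => /forallP /(_ C).
    by rewrite CB /= -ltnNge => H1; rewrite -ltnS (prednK M0).
  move/leq_ltn_trans; apply; by rewrite (prednK M0).
move: CB; rewrite inE => /existsP [x /andP [xV /andP [/eqP CE C1]]].
have CV : C \subset V by apply/fintype.subsetP => y; rewrite CE inE; apply: connect_inV.
have xC : x \in C by rewrite CE inE connect0.
have [y yC yx] : exists2 y, y \in C & y != x.
  case: (boolP [exists y in C, y != x]) => [/existsP [y /andP [? ?]]|H]; first by exists y.
  exfalso; move: C1; apply/negP; rewrite -leqNgt.
  have -> : C = [set x].
    apply/setP => z; rewrite inE; apply/idP/eqP => [zC|->//].
    by move: H; rewrite negb_exists => /forallP /(_ z); rewrite zC /= negbK => /eqP.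
  by rewrite cards1.
have [i0 _] : exists i0 : 'I_n, true.
  case: (boolP [exists i, y i != x i]) => [/existsP [i _]|H]; first by exists i.
  exfalso; move: yx; apply/negP; rewrite negbK; apply/eqP/ffunP => i.
  by move: H; rewrite negb_exists => /forallP /(_ i); rewrite negbK => /eqP.
have sym := sym_connect_sym (induced_sym V).
have Hind : forall k, (k < M)%N -> exists f, [/\ codes_ok f, uniq (gen x f k),
     size (gen x f k) = k.+1 & all [in C] (gen x f k)].
  elim => [_|k IH kM].
    exists [ffun o => (o, i0)]; split => //=; last by rewrite xC.
    by apply/forallP => o; rewrite ffunE.
  have [f [fok fu fs fC]] := IH (ltnW kM).
  set s := gen x f k in fu fs fC.
  have [y1 y1C y1s] : exists2 y1, y1 \in C & y1 \notin s.
    case: (boolP [exists y1 in C, y1 \notin s]) => [/existsP [y1 /andP [? ?]]|H].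
      by exists y1.
    exfalso; have : C \subset [set z in s].
      apply/fintype.subsetP => z zC; move: H; rewrite negb_exists => /forallP /(_ z).
      by rewrite zC /= negbK inE.
    move/subset_leq_card; rewrite cardsE (card_uniqP fu) fs.
    by move/(leq_trans CM); rewrite leqNgt kM.
  have xs : x \in s by apply: mem_gen0.
  have cxy1 : connect (induced_rel V) x y1 by move: y1C; rewrite CE inE.
  move: (cxy1) => /connectP [p Hp Hl].
  have Hl1 : last x p \notin s by rewrite -Hl.
  have [u [z [us zs euz cxz]]] := exit_path xs Hp Hl1.
  have zC : z \in C by rewrite CE inE.
  have [i zf] : exists i, z = flipv u i by apply: hadj_flip; case/and3P: euz.
  have ju : (index u s < k.+1)%N by rewrite -fs index_mem.
  pose o := Ordinal kM.
  exists (upd f o (Ordinal (ltn_trans ju kM), i)).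
  have gk : gen x (upd f o (Ordinal (ltn_trans ju kM), i)) k = s by rewrite gen_upd.
  have -> : gen x (upd f o (Ordinal (ltn_trans ju kM), i)) k.+1 = rcons s z.
    rewrite /= gk; case: insubP => [ o1 _ Ho1|]; last by rewrite kM.
    have -> : o1 = o by apply: val_inj.
    by rewrite ffunE eqxx /= nth_index // zf.
  split.
  - apply/forallP => o1; rewrite ffunE; case: eqP => [->|_] /=; first by rewrite ltnW.
    by move/forallP: fok.
  - by rewrite rcons_uniq zs fu.
  - by rewrite size_rcons fs.
  - by rewrite all_rcons zC fC.
have HM1 : (M.-1 < M)%N by rewrite (prednK M0).
have [f [fok fu fs fC]] := Hind M.-1 HM1.
exists (Sc x f).
  apply/imsetP; exists (x, f) => //; rewrite inE /= fok /= /Sc cardsE (card_uniqP fu) fs.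
  by rewrite (prednK M0).
apply/fintype.subsetP => z; rewrite inE => zs; apply: (fintype.subsetP CV).
by move/allP: fC => /(_ z zs).
Qed.

End Comb.

Lemma prod_succ M : \prod_(o < M) o.+1 = M`!.
Proof. elim: M => [|M IH]; first by rewrite big_ord0. by rewrite big_ord_recr /= IH factS mulnC. Qed.

Lemma card_le_ord M (o : 'I_M) : (#|[pred j : 'I_M | (j <= o)%N]| <= o.+1)%N.
Proof.
rewrite -(card_in_imset (f := fun j : 'I_M => (inord j : 'I_o.+1))).
  by apply: leq_trans (max_card _) _; rewrite card_ord.
move=> a b Ha Hb /(congr1 val) /=; rewrite !inordK ?ltnS //; exact: val_inj.
Qed.

Lemma card_codes n M : (#|[set f : pcode n M | codes_ok f]| <= M`! * n ^ M)%N.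
Proof.
have -> : #|[set f : pcode n M | codes_ok f]| =
    #|family (fun o : 'I_M => [pred p : 'I_M * 'I_n | (p.1 <= o)%N])|.
  apply: eq_card => f; rewrite inE; apply/forallP/familyP => H o; exact: H o.
rewrite card_family foldrE big_map big_enum /=.
apply: leq_trans (_ : \prod_(o < M) (o.+1 * n) <= _)%N.
  apply: leq_prod => o _.
  have -> : #|[pred p : 'I_M * 'I_n | (p.1 <= o)%N]| = #|[predX [pred j : 'I_M | (j <= o)%N] & 'I_n]|.
    by apply: eq_card => -[a b]; rewrite !inE /= andbT.
  by rewrite cardX card_ord leq_mul2r card_le_ord orbT.
by rewrite big_split /= prod_succ prod_nat_const card_ord.
Qed.

Lemma card_Sfam n M : (#|Sfam n M| <= 2 ^ n * (M`! * n ^ M))%N.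
Proof.
apply: leq_trans (leq_imset_card _ _) _.
apply: leq_trans (_ : #|finset.setX [set: vtx n] [set f : pcode n M | codes_ok f]| <= _)%N.
  apply: subset_leq_card; apply/fintype.subsetP => -[x f]; rewrite !inE /= => /andP [-> _].
  done.
rewrite cardsX cardsT card_ffun card_bool card_ord leq_mul2l card_codes orbT //.
Qed.

Local Open Scope ring_scope.

Lemma lnM' (R : realType) (x y : R) : 0 < x -> 0 < y -> ln (x * y) = ln x + ln y.
Proof. by move=> hx hy; rewrite lnM ?posrE. Qed.

Lemma key_ineq (R : realType) (n M : nat) (rho : R) : (0 < n)%N -> (0 < M)%N ->
  rho_plus n M <= rho ->
  (2 ^ n * (M`! * n ^ M))%:R * ((2 `^ (rho * n%:R))^-1) ^+ M <= (n%:R ^+ 2)^-1.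
Proof.
move=> n0 M0 hr.
set L2 := ln (2:R).
have L2p : 0 < L2 by apply: ln_gt0; rewrite ltr1n.
have a_eq : 2 `^ (rho * n%:R) = expR (rho * n%:R * L2).
  by rewrite /powR (negbTE (_ : (2:R) != 0)) // pnatr_eq0.
rewrite a_eq exprVn -expRM_natr.
set E := expR _.
have Ep : 0 < E by apply: expR_gt0.
set N := ((2 ^ n * (M`! * n ^ M))%:R : R).
have nR : 0 < (n%:R : R) by rewrite ltr0n.
have Np : 0 < N by rewrite ltr0n muln_gt0 expn_gt0 /= muln_gt0 fact_gt0 expn_gt0 n0.
have key : N * n%:R ^+ 2 <= E.
  have NN : 0 < N * n%:R ^+ 2 by rewrite mulr_gt0 // exprn_gt0.
  rewrite -[N * _]lnK ?posrE // ler_expR.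
  have -> : ln (N * n%:R ^+ 2) = n%:R * L2 + ln (M`!%:R) + (M.+2)%:R * ln n%:R.
    have p2 : (0 : R) < 2%:R ^+ n by rewrite exprn_gt0 // ltr0n.
    have pf : (0 : R) < M`!%:R by rewrite ltr0n fact_gt0.
    have pnM : (0 : R) < n%:R ^+ M by rewrite exprn_gt0.
    have pn2 : (0 : R) < n%:R ^+ 2 by rewrite exprn_gt0.
    rewrite /N !natrM !natrX.
    rewrite (lnM' (mulr_gt0 p2 (mulr_gt0 pf pnM)) pn2) (lnM' p2 (mulr_gt0 pf pnM)) (lnM' pf pnM).
    have l2 : (0:R) < 2 by [].
    rewrite (lnXn _ l2) (lnXn _ nR) (lnXn _ nR).
    rewrite /L2 -[ln 2 *+ n]mulr_natr -[ln n%:R *+ M]mulr_natr -[ln n%:R *+ 2]mulr_natr.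
    rewrite -[M.+2]addn2 natrD; ring.
  have hM : (0 : R) < M%:R by rewrite ltr0n.
  have h2 := ler_wpM2l (ltW (mulr_gt0 (mulr_gt0 hM nR) L2p)) hr.
  have e2 : M%:R * n%:R * L2 * rho_plus n M = n%:R * L2 + ln (M`!%:R) + (M.+2)%:R * ln n%:R.
    rewrite /rho_plus /L2; field.
    by rewrite !gt_eqF.
  rewrite e2 in h2.
  move: h2; set q := _ + _; move=> h2; apply: le_trans h2 _; rewrite le_eqVlt; apply/orP; left; apply/eqP; ring.
rewrite ler_pdivrMr // mulrC ler_pdivlMr // ?exprn_gt0 //.
Qed.

Local Open Scope ring_scope.

Lemma inv_sq_step (R : realType) (x : R) : 0 <= x ->
  2 - (x + 1)^-1 + ((x + 2) ^+ 2)^-1 <= 2 - (x + 2)^-1.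
Proof.
move=> x0.
have h1 : 0 < x + 1 by lra.
have h2 : 0 < x + 2 by lra.
have e : (x + 1)^-1 - (x + 2)^-1 = ((x + 1) * (x + 2))^-1.
  by field; rewrite !gt_eqF.
have : ((x + 2) ^+ 2)^-1 <= ((x + 1) * (x + 2))^-1.
  rewrite lef_pV2 ?posrE ?mulr_gt0 ?exprn_gt0 // expr2 ler_pM2r //; lra.
lra.
Qed.

Lemma partial_inv_sq (R : realType) N :
  \sum_(0 <= k < N.+2) ((k%:R : R) ^+ 2)^-1 <= 2 - (N.+1%:R)^-1.
Proof.
elim: N => [|N IH].
  by rewrite big_nat_recr //= big_nat_recr //= big_geq // expr0n /= invr0 add0r expr1n invr1 add0r; lra.
rewrite big_nat_recr //=; apply: le_trans (_ : 2 - (N.+1%:R)^-1 + ((N.+2%:R) ^+ 2)^-1 <= _).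
  by rewrite lerD2r.
have := @inv_sq_step R N%:R (ler0n _ _).
by rewrite -[N.+2]addn2 -[N.+1]addn1 !natrD.
Qed.

Lemma sum_inv_sq (R : realType) :
  (\sum_(k <oo) ((((k%:R : R) ^+ 2)^-1)%:E) <= 2%:E)%E.
Proof.
apply: lime_le.
  by apply: is_cvg_nneseries => k _ _; rewrite lee_fin invr_ge0 exprn_ge0.
apply: nearW => N; rewrite sumEFin lee_fin.
apply: le_trans (_ : \sum_(0 <= k < N.+2) ((k%:R : R) ^+ 2)^-1 <= _).
  rewrite big_nat_recr //= big_nat_recr //= -addrA lerDl.
  by rewrite addr_ge0 // invr_ge0 exprn_ge0.
apply: le_trans (partial_inv_sq R N) _; rewrite lerBlDr lerDl invr_ge0 //.
Qed.

Local Open Scope classical_set_scope.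
Local Open Scope ring_scope.

Section Prob.
Variables (R : realType) (d : measure_display) (T : measurableType d) (P : probability T R).

Lemma union_bound (I : Type) (s : seq I) (F : I -> set T) :
  (forall i, measurable (F i)) ->
  (P (\big[setU/set0]_(i <- s) F i) <= \sum_(i <- s) P (F i))%E.
Proof.
move=> mF; elim: s => [|a s IH]; first by rewrite !big_nil measure0.
rewrite !big_cons; apply: le_trans (measureU2 _ _ _) _ => //.
  by apply: bigsetU_measurable => i _.
exact: leeD.
Qed.

Lemma in_bigsetU (I : eqType) (s : seq I) (F : I -> set T) i w :
  i \in s -> F i w -> (\big[setU/set0]_(j <- s) F j) w.
Proof.
elim: s => [//|a s IH]; rewrite in_cons big_cons => /orP [/eqP <- Fw|iS Fw].
  by left.
by right; apply: IH.
Qed.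

Variables (n : nat) (G : vtx n -> {RV P >-> R}) (b : R -> bool) (p : R).
Hypothesis Hind : mutually_independent P (fun x => (G x : T -> R)).
Hypothesis mb : measurable [set t | b t].
Hypothesis Hp : forall x, P [set w | b (G x w)] = p%:E.

Definition Vw w : {set vtx n} := finset (fun x => b (G x w)).
Definition EvS (S : {set vtx n}) := [set w | S \subset Vw w].

Lemma mEv x : measurable [set w | b (G x w)].
Proof. exact: (measurable_funPTI (G x) mb). Qed.

Lemma EvS_eq S : EvS S = \bigcap_(x in [set: vtx n])
   ((G x : T -> R) @^-1` (if x \in S then [set t | b t] else setT)).
Proof.
apply/seteqP; split => w /=.
  move=> /fintype.subsetP H x _ /=; case: ifP => // xS.
  by have := H x xS; rewrite inE.
move=> H; apply/fintype.subsetP => x xS; rewrite inE.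
by have := H x I; rewrite /= xS.
Qed.

Lemma mEvS S : measurable (EvS S).
Proof.
rewrite EvS_eq; apply: fin_bigcap_measurable; first exact: finite_finset.
move=> x _; case: ifP => _; first exact: mEv.
by rewrite preimage_setT.
Qed.

Lemma PEvS S : P (EvS S) = (p ^+ #|S|)%:E.
Proof.
rewrite EvS_eq Hind; last by move=> x; case: ifP.
have -> : (\prod_(x : vtx n) P ((G x : T -> R) @^-1` (if x \in S then [set t | b t] else setT)) =
    \prod_(x : vtx n) (if x \in S then p else 1)%:E)%E.
  by apply: eq_bigr => x _; case: ifP => _; [exact: Hp | rewrite preimage_setT probability_setT].
rewrite prodEFin; congr (_%:E).
by rewrite -big_mkcond /= prodr_const.
Qed.

Lemma bigsetU_in (I : eqType) (s : seq I) (F : I -> set T) w :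
  (\big[setU/set0]_(j <- s) F j) w -> exists2 i, i \in s & F i w.
Proof.
elim: s => [|a s IH]; first by rewrite big_nil.
rewrite big_cons => -[Fw|/IH [i iS Fw]]; first by exists a; rewrite ?mem_head.
by exists i; rewrite // in_cons iS orbT.
Qed.

Lemma mVwQ (Q : pred {set vtx n}) : measurable [set w | Q (Vw w)].
Proof.
have -> : [set w | Q (Vw w)] = \big[setU/set0]_(S <- enum Q) [set w | Vw w = S].
  apply/seteqP; split => w /=.
    by move=> Qw; apply: (@in_bigsetU _ _ _ (Vw w)) => //; rewrite mem_enum.
  by move=> /bigsetU_in [S]; rewrite mem_enum => QS /= ->.
apply: bigsetU_measurable => S _.
have -> : [set w | Vw w = S] = \bigcap_(x in [set: vtx n])
     ((G x : T -> R) @^-1` [set t | b t = (x \in S)]).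
  apply/seteqP; split => w /=.
    by move=> <- x _ /=; rewrite inE.
  by move=> H; apply/setP => x; rewrite inE; apply: H.
apply: fin_bigcap_measurable; first exact: finite_finset.
move=> x _; apply: measurable_funPTI.
case: (x \in S).
  by rewrite (_ : [set t | b t = true] = [set t | b t]).
rewrite (_ : [set t | b t = false] = ~` [set t | b t]); first exact: measurableC.
by apply/seteqP; split => t /=; case: (b t).
Qed.

End Prob.

Unset Implicit Arguments.
Local Open Scope classical_set_scope.
Local Open Scope ring_scope.

Theorem lemma2p2 (R : realType) (d : measure_display) (T : measurableType d)
  (P : probability T R)
  (g : forall n : nat, vtx n -> {RV P >-> R})
  (Hind : forall n : nat, mutually_independent P (fun x : vtx n => (g n x : T -> R)))
  (Hgauss : forall (n : nat) (x : vtx n), std_gaussian P (g n x))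
  (beta : R) (Hbeta : 0 < beta)
  (rho : nat -> R) (Hrho : forall n, 0 < rho n)
  (m : nat -> nat) (Hm : forall n, (1 < m n)%N)
  (r : nat -> R)
  (Hr : forall (n : nat) (x : vtx n),
     ((2 `^ (rho n * n%:R))%:E *
       P [set w | (r n <= expR (- (beta * Num.sqrt (n%:R) * g n x w)))%R] = 1)%E)
  (Hrho_ge : forall n, (0 < n)%N -> rho_plus n (m n) <= rho n) :
  P (\bigcup_N \bigcap_(n in [set n | (N <= n)%N])
       [set w | (max_comp_size
           (finset (fun x : vtx n => (r n <= expR (- (beta * Num.sqrt (n%:R) * g n x w)))%R))
           < m n)%N]) = 1%E.
Proof.
pose b n := fun t : R => (r n <= expR (- (beta * Num.sqrt (n%:R) * t)))%R.
pose p n := (2 `^ (rho n * n%:R))^-1 : R.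
have mb : forall n, measurable [set t | b n t].
  move=> n.
  have -> : [set t | b n t] =
      (fun t => expR (- (beta * Num.sqrt n%:R) * t)) @^-1` `[r n, +oo[.
    by rewrite set_itvcy; apply/seteqP; split => t /=; rewrite mulNr.
  rewrite -[X in measurable X]setTI.
  have mf : measurable_fun setT (fun t : R => expR (- (beta * Num.sqrt n%:R) * t)).
    apply: measurableT_comp. exact: measurable_realfun.measurable_expR. exact: measurable_realfun.mulrl_measurable.
  exact: mf measurableT _ (measurable_itv _).
have Hp : forall n x, P [set w | b n (g n x w)] = (p n)%:E.
  move=> n x.
  have a0 : 2 `^ (rho n * n%:R) != 0 :> R by rewrite gt_eqF // powR_gt0.
  transitivity ((p n)%:E * ((2 `^ (rho n * n%:R))%:E * P [set w | b n (g n x w)]))%E.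
    by rewrite muleA -EFinM mulVf // mul1e.
  by rewrite Hr mule1.
pose E n := \big[setU/set0]_(S <- enum (Sfam n (m n))) EvS (g n) (b n) S.
have mE : forall n, measurable (E n).
  by move=> n; apply: bigsetU_measurable => S _; apply: mEvS.
have PE : forall n, (P (E n) <= ((n%:R ^+ 2)^-1)%:E)%E.
  move=> n; have UB := union_bound P (enum (Sfam n (m n))) (fun S => mEvS (g n) (mb n) S).
  rewrite /E; eapply le_trans; first exact: UB.
  rewrite big_seq.
  rewrite (eq_bigr (fun _ => ((p n) ^+ m n)%:E)); last first.
    move=> S; rewrite mem_enum => /imsetP [c]; rewrite inE => /andP [_ /eqP cM] ->.
    by rewrite (PEvS (Hind n) (mb n) (Hp n)) cM.
  rewrite -big_seq big_enum /= sumEFin lee_fin sumr_const -[_ *+ #|_|]mulr_natl.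
  have p0 : 0 <= p n ^+ m n by rewrite exprn_ge0 // invr_ge0 powR_ge0.
  have cb : (#|Sfam n (m n)|%:R <= (2 ^ n * ((m n)`! * n ^ m n))%:R :> R).
    by rewrite ler_nat card_Sfam.
  apply: le_trans (ler_wpM2r p0 cb) _.
  clear UB p0 cb; case: n => [|n].
    by rewrite exp0n ?muln0 ?mul0r ?expr0n ?invr0 // ltnW.
  apply: key_ineq => //; [exact: ltnW | exact: Hrho_ge].
have Hsum : (\sum_(n <oo) P (E n) < +oo)%E.
  apply: le_lt_trans (_ : _ <= \sum_(n <oo) (((n%:R : R) ^+ 2)^-1)%:E)%E _.
    by apply: lee_nneseries => // k _; apply: measure_ge0.
  by apply: le_lt_trans (sum_inv_sq R) _; apply: ltry.
have L0 : P (lim_sup_set E) = 0%E := lim_sup_set_cvg0 mE Hsum.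
have cov : forall n w, ~~ (max_comp_size (Vw (g n) (b n) w) < m n)%N -> E n w.
  move=> n w; rewrite -leqNgt => H.
  have [S SF Ssub] := @cover_comp n (m n) _ (Hm n) H.
  by apply: (@in_bigsetU _ _ _ _ _ S); rewrite ?mem_enum.
have mG : forall n, measurable [set w | (max_comp_size (Vw (g n) (b n) w) < m n)%N].
  move=> n; exact: (mVwQ (g n) (mb n) (fun S => (max_comp_size S < m n)%N)).
have mL : measurable (lim_sup_set E).
  by apply: bigcapT_measurable => k; apply: bigcup_measurable => j _; exact: mE.
have mTg : measurable (\bigcup_N \bigcap_(n in [set n | (N <= n)%N])
       [set w | (max_comp_size (Vw (g n) (b n) w) < m n)%N]).
  apply: bigcupT_measurable => N; apply: bigcap_measurable; first by exists N => /=.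
  by move=> k _; exact: mG.
apply/eqP; rewrite eq_le probability_le1 //=.
have <- : P (~` lim_sup_set E) = 1%E by rewrite probability_setC // L0 sube0.
apply: le_measure; rewrite ?inE; [exact: measurableC | exact: mTg |].
move=> w Hw.
have [N HN] : exists N, ~ (\bigcup_(j in [set j | (N <= j)%N]) E j) w.
  by apply/existsNP => H; apply: Hw => N _; apply: H.
exists N => // n /= Nn.
case: (boolP (max_comp_size (Vw (g n) (b n) w) < m n)%N) => // H.
by exfalso; apply: HN; exists n => //; apply: cov.
Qed.
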